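(* Let $H$ be a function with domain $\omega$ such that each $H(n)$ is a finite set with at least two elements. If $\mathcal U\in V$ is a P-point ultrafilter on $\omega$, then $\Vdash_{PT_H}$ ''$\mathcal U$ generates an ultrafilter'', i.e. in the extension, for every $x\subseteq\omega$ there is $u\in\mathcal U$ with $u\subseteq x$ or $u\subseteq\omega\setminus x$.
   Context: An ultrafilter $\mathcal U$ on $\omega$ is a P-point if for every sequence $\langle A_n:n<\omega\rangle$ of members of $\mathcal U$ there is $A\in\mathcal U$ with $A\setminus A_n$ finite for all $n$. $PT_H$ is the set of all $p$ such that (A) $p$ is a nonempty set of finite sequences closed under initial segments; (B) $\eta(l)\in H(l)$ for $\eta\in p$, $l<|\eta|$; (C) for $\eta\in p$, $\mathrm{succ}_p(\eta)=\{i:\eta^\frown i\in p\}$ is a singleton or equals $H(|\eta|)$; (D) every $\eta\in p$ has an extension $\nu\in p$ with $\mathrm{succ}_p(\nu)=H(|\nu|)$. $q$ is stronger than $p$ iff $q\subseteq p$. *)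

(* Defs.v *)
(* plain Prop-valued sets.  Forcing is rendered combinatorially
   through nice names. *)
From Stdlib Require Import List Arith.
Import ListNotations.

Definition nset := nat -> Prop.

Definition almost_sub (A B : nset) : Prop :=
  exists m, forall k, m <= k -> A k -> B k.

Definition ultrafilter (U : nset -> Prop) : Prop :=
  (forall A B : nset, U A -> (forall k, A k -> B k) -> U B) /\
  (forall A B : nset, U A -> U B -> U (fun k => A k /\ B k)) /\
  ~ U (fun _ => False) /\
  (forall A : nset, U A \/ U (fun k => ~ A k)).

Definition P_point (U : nset -> Prop) : Prop :=
  ultrafilter U /\
  forall As : nat -> nset, (forall n, U (As n)) ->
    exists A, U A /\ forall n, almost_sub A (As n).

Definition finite_set {T : Type} (S : T -> Prop) : Prop :=
  exists l : list T, forall x, S x <-> In x l.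

Definition good_H {T : Type} (H : nat -> T -> Prop) : Prop :=
  forall n, finite_set (H n) /\ exists x y, x <> y /\ H n x /\ H n y.

Definition full_split {T : Type} (H : nat -> T -> Prop) (p : list T -> Prop)
  (eta : list T) : Prop :=
  forall i, p (eta ++ [i]) <-> H (length eta) i.

Definition PT {T : Type} (H : nat -> T -> Prop) (p : list T -> Prop) : Prop :=
  (exists eta, p eta) /\
  (forall eta nu, p (eta ++ nu) -> p eta) /\
  (forall eta, p eta -> forall l x, nth_error eta l = Some x -> H l x) /\
  (forall eta, p eta ->
     (exists i, p (eta ++ [i]) /\ forall j, p (eta ++ [j]) -> j = i)
     \/ full_split H p eta) /\
  (forall eta, p eta -> exists nu, p (eta ++ nu) /\ full_split H p (eta ++ nu)).

Definition stronger {T : Type} (q p : list T -> Prop) : Prop :=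
  forall eta, q eta -> p eta.

Definition compatible {T : Type} (H : nat -> T -> Prop) (q r : list T -> Prop) : Prop :=
  exists s, PT H s /\ stronger s q /\ stronger s r.

(* A nice PT_H-name for a subset of omega: a set X of pairs (n, r) with r a
   condition; its interpretation by a generic G is {n | exists r in G, X n r}. *)
Definition nice_name {T : Type} (H : nat -> T -> Prop) (X : nat -> (list T -> Prop) -> Prop) : Prop :=
  forall n r, X n r -> PT H r.

Definition forces_in {T : Type} (H : nat -> T -> Prop) (q : list T -> Prop)
  (X : nat -> (list T -> Prop) -> Prop) (n : nat) : Prop :=
  forall q', PT H q' -> stronger q' q -> exists r, X n r /\ compatible H q' r.

Definition forces_notin {T : Type} (H : nat -> T -> Prop) (q : list T -> Prop)
  (X : nat -> (list T -> Prop) -> Prop) (n : nat) : Prop :=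
  forall r, X n r -> ~ compatible H q r.

(* Main.v *)
Require Import Defs.
From Stdlib Require Import List Arith Lia Classical ClassicalChoice FunctionalExtensionality.
From Stdlib Require Cantor.
Import ListNotations.

Definition pre {T} (a b : list T) := exists d, b = a ++ d.
Definition restr {T} (q : list T -> Prop) (e : list T) : list T -> Prop :=
  fun m => q m /\ (pre m e \/ pre e m).

Lemma pre_refl {T} (a : list T) : pre a a.
Proof. exists []. now rewrite app_nil_r. Qed.

Lemma pre_app {T} (a d : list T) : pre a (a ++ d).
Proof. now exists d. Qed.

Lemma pre_trans {T} (a b c : list T) : pre a b -> pre b c -> pre a c.
Proof. intros [d1 ->] [d2 ->]. exists (d1 ++ d2). now rewrite app_assoc. Qed.

Lemma pre_len {T} (a b : list T) : pre a b -> length a <= length b.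
Proof. intros [d ->]. rewrite length_app. lia. Qed.

Lemma pre_eq_len {T} (a b : list T) : pre a b -> length b <= length a -> a = b.
Proof.
  intros [d ->] Hl. rewrite length_app in Hl. destruct d; simpl in *.
  - now rewrite app_nil_r.
  - lia.
Qed.

Lemma pre_common {T} (a b c : list T) : pre a c -> pre b c -> pre a b \/ pre b a.
Proof.
  intros [d1 E1] [d2 E2]. rewrite E1 in E2.
  apply app_eq_app in E2. destruct E2 as [l [[E3 _]|[E3 _]]].
  - right. now exists l.
  - left. now exists l.
Qed.

Lemma pre_firstn {T} (a b : list T) : pre a b -> firstn (length a) b = a.
Proof. intros [d ->]. rewrite firstn_app, Nat.sub_diag, firstn_all. simpl. now rewrite app_nil_r. Qed.

Lemma firstn_pre {T} (n : nat) (b : list T) : pre (firstn n b) b.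
Proof. exists (skipn n b). now rewrite firstn_skipn. Qed.


Lemma PT_nil {T} (H : nat -> T -> Prop) r : PT H r -> r [].
Proof. intros [[e He] [Hc _]]. apply (Hc [] e). exact He. Qed.

Lemma PT_closed {T} (H : nat -> T -> Prop) r a b : PT H r -> r b -> pre a b -> r a.
Proof. intros [_ [Hc _]] Hb [d ->]. eapply Hc; eauto. Qed.

Lemma PT_succ {T} (H : nat -> T -> Prop) r e : good_H H -> PT H r -> r e -> exists i, r (e ++ [i]).
Proof.
  intros G [_ [_ [_ [HC _]]]] He. destruct (HC e He) as [[i [Hi _]]|Hf].
  - eauto.
  - destruct (G (length e)) as [_ [x [y [_ [Hx _]]]]]. exists x. now apply Hf.
Qed.

Lemma PT_extend {T} (H : nat -> T -> Prop) r e : good_H H -> PT H r -> r e ->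
  forall k, exists d, r (e ++ d) /\ length d = k.
Proof.
  intros G P He k. induction k.
  - exists []. now rewrite app_nil_r.
  - destruct IHk as [d [Hd Hl]]. destruct (PT_succ H r _ G P Hd) as [i Hi].
    exists (d ++ [i]). rewrite app_assoc. split; auto. rewrite length_app; simpl; lia.
Qed.

Lemma PT_level {T} (H : nat -> T -> Prop) r k : good_H H -> PT H r -> exists e, r e /\ length e = k.
Proof.
  intros G P. destruct (PT_extend H r [] G P (PT_nil H r P) k) as [d [Hd Hl]]. exists d. auto.
Qed.

Lemma succ_strict {T} (m d : list T) a j :
  pre (m ++ [j]) (m ++ a :: d) \/ pre (m ++ a :: d) (m ++ [j]) -> j = a.
Proof.
  intros [[f Hf]|[f Hf]]; rewrite <- app_assoc in Hf; apply app_inv_head in Hf; simpl in Hf;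
  inversion Hf; auto.
Qed.

Lemma restr_PT {T} (H : nat -> T -> Prop) q e : PT H q -> q e -> PT H (restr q e).
Proof.
  intros P He. pose proof P as [HA [HCl [HB [HC HD]]]].
  split; [|split; [|split; [|split]]].
  - exists e. split; auto. left. apply pre_refl.
  - intros a b [Hab Hc]. split; [eapply HCl; eauto|].
    destruct Hc as [Hc|Hc].
    + left. eapply pre_trans; [apply pre_app|exact Hc].
    + apply (pre_common a e (a ++ b)); auto. apply pre_app.
  - intros a [Ha _]. eauto.
  - intros m [Hm Cm]. destruct Cm as [[d Hd]|Hem].
    + destruct d as [|a d].
      * rewrite app_nil_r in Hd. subst e.
        destruct (HC m Hm) as [[i [Hi Hu]]|Hf].
        -- left. exists i. split. split; auto. right. apply pre_app.
           intros j [Hj _]. auto.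
        -- right. intros i. split. intros [Hi _]. now apply Hf.
           intros Hi. split. now apply Hf. right. apply pre_app.
      * subst e. left. exists a. split. split. apply (PT_closed H q (m++[a]) (m++a::d)); auto. exists d. now rewrite <- app_assoc.
        left. exists d. now rewrite <- app_assoc.
        intros j [Hj Cj]. eapply succ_strict; eauto.
    + assert (Hs : forall i, restr q e (m ++ [i]) <-> q (m ++ [i])).
      { intros i; split. intros [? _]; auto. intros Hi. split; auto. right.
        eapply pre_trans; eauto. apply pre_app. }
      destruct (HC m Hm) as [[i [Hi Hu]]|Hf].
      * left. exists i. split. apply (proj2 (Hs i)); exact Hi. intros j Hj. apply Hu. apply (proj1 (Hs j)); exact Hj.
      * right. intros i. rewrite Hs. apply Hf.
  - intros m [Hm Cm].
    assert (exists m', q m' /\ pre e m' /\ pre m m') as [m' [Hm' [Em' Mm']]].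
    { destruct Cm as [C|C]. exists e. split; auto. split; auto. apply pre_refl.
      exists m. split; auto. split; auto. apply pre_refl. }
    destruct (HD m' Hm') as [nu [Hn Hf]]. destruct Mm' as [f ->].
    exists (f ++ nu). rewrite app_assoc. split.
    + split; auto. right. eapply pre_trans; eauto. apply pre_app.
    + intros i. specialize (Hf i). split. intros [? _]; apply Hf; auto. intros Hi; apply Hf in Hi; split; auto.
      right. eapply pre_trans; [exact Em'|]. exists (nu ++ [i]). now rewrite <- !app_assoc.
Qed.

Lemma level_list {T} (H : nat -> T -> Prop) : good_H H ->
  forall L s, exists l : list (list T), forall e,
    (forall i x, nth_error e i = Some x -> H (s + i) x) -> length e = L -> In e l.
Proof.
  intros G L. induction L; intros s.
  - exists [[]]. intros e _ He. destruct e; simpl in *; [auto|lia].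
  - destruct (IHL (S s)) as [l Hl]. destruct (G s) as [[hl Hhl] _].
    exists (flat_map (fun x => map (fun e => x :: e) l) hl).
    intros e He Hlen. destruct e as [|x e]; simpl in Hlen; [lia|].
    apply in_flat_map. exists x. split.
    + apply Hhl. specialize (He 0 x eq_refl). now rewrite Nat.add_0_r in He.
    + apply in_map. apply Hl; [|lia]. intros i y Hy. specialize (He (S i) y Hy).
      now rewrite Nat.add_succ_r in He.
Qed.

Lemma PT_level_list {T} (H : nat -> T -> Prop) : good_H H ->
  forall L, exists l : list (list T), forall q e, PT H q -> q e -> length e = L -> In e l.
Proof.
  intros G L. destruct (level_list H G L 0) as [l Hl]. exists l. intros q e P He HL.
  apply Hl; auto. intros i x Hx. destruct P as [_ [_ [HB _]]]. eapply HB; eauto.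
Qed.

Lemma U_full (U : nset -> Prop) : ultrafilter U -> U (fun _ => True).
Proof.
  intros [Hup [_ [_ Hu]]]. destruct (Hu (fun _ => True)) as [A|A]; auto.
  eapply Hup; [exact A|]. simpl; auto.
Qed.

Lemma U_fin {A : Type} (U : nset -> Prop) (P : A -> Prop) (Wf : A -> nset) :
  ultrafilter U -> (forall e, P e -> U (Wf e)) ->
  forall l, U (fun n => forall e, In e l -> P e -> Wf e n).
Proof.
  intros HU HW l. pose proof HU as [Hup [Hint _]]. induction l as [|a l IH].
  - eapply Hup; [apply (U_full U HU)|]. simpl. intros k _ e [].
  - destruct (classic (P a)) as [Pa|Pa].
    + eapply Hup; [apply (Hint _ _ (HW a Pa) IH)|].
      intros k [H1 H2] e [<-|Ie] Pe; auto.
    + eapply Hup; [exact IH|]. intros k Hk e [<-|Ie] Pe; [contradiction|auto].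
Qed.

Lemma max_list {A : Type} (P : A -> Prop) (Q : A -> nat -> Prop) :
  (forall a, P a -> exists m, Q a m) ->
  forall l, exists M, forall a, In a l -> P a -> exists m, m < M /\ Q a m.
Proof.
  intros HQ l. induction l as [|a l [M IH]].
  - exists 0. intros a [].
  - destruct (classic (P a)) as [Pa|Pa].
    + destruct (HQ a Pa) as [m Hm]. exists (S (m + M)). intros b [<-|Ib] Pb.
      * exists m. split; auto; lia.
      * destruct (IH b Ib Pb) as [m' [H1 H2]]. exists m'. split; auto; lia.
    + exists M. intros b [<-|Ib] Pb; [contradiction|auto].
Qed.

Definition forces_t {T} (H : nat -> T -> Prop) X (t : bool) q n :=
  if t then forces_in H q X n else forces_notin H q X n.

Lemma forces_t_mono {T} (H : nat -> T -> Prop) X t q1 q2 n :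
  stronger q1 q2 -> forces_t H X t q2 n -> forces_t H X t q1 n.
Proof.
  intros S12. destruct t; simpl.
  - intros F q' P Sq'. apply F; auto. intros e He; auto.
  - intros F r Xr [s [Ps [S1 S2]]]. apply (F r Xr). exists s. split; auto. split; auto.
    intros e He; auto.
Qed.

Lemma restr_stronger {T} (q : list T -> Prop) e : stronger (restr q e) q.
Proof. intros m [Hm _]; auto. Qed.

Lemma restr_mono {T} (q1 q2 : list T -> Prop) e : stronger q1 q2 -> stronger (restr q1 e) (restr q2 e).
Proof. intros S m [Hm C]; split; auto. Qed.

Lemma front_forces {T} (H : nat -> T -> Prop) X t q L n : good_H H -> PT H q ->
  (forall e, q e -> length e = L -> forces_t H X t (restr q e) n) -> forces_t H X t q n.
Proof.
  intros G P F. destruct t; simpl in *.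
  - intros q'' P'' S''. destruct (PT_level H q'' L G P'') as [e [He HL]].
    specialize (F e (S'' e He) HL (restr q'' e)).
    destruct F as [r [Xr [s [Ps [S1 S2]]]]].
    + apply restr_PT; auto.
    + apply restr_mono; auto.
    + exists r. split; auto. exists s. split; auto. split; auto.
      intros m Hm. apply restr_stronger with (e := e). auto.
  - intros r Xr [s [Ps [S1 S2]]]. destruct (PT_level H s L G Ps) as [e [He HL]].
    apply (F e (S1 e He) HL r Xr). exists (restr s e). split; [apply restr_PT; auto|].
    split. apply restr_mono; auto. intros m Hm. apply S2. apply restr_stronger in Hm; auto.
Qed.

Lemma piece_contains {T} (H : nat -> T -> Prop) q e r : good_H H -> PT H r ->
  stronger r (restr q e) -> r e.
Proof.
  intros G P S. destruct (PT_level H r (length e) G P) as [m [Hm HL]].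
  destruct (S m Hm) as [_ [C|C]].
  - apply pre_eq_len in C; [subst; auto|lia].
  - apply pre_eq_len in C; [subst; auto|lia].
Qed.

Definition fus {T} (H : nat -> T -> Prop) (q : list T -> Prop) L (q' : list T -> Prop) L' :=
  PT H q' /\ stronger q' q /\ (forall v, length v <= L -> (q' v <-> q v)) /\ L < L' /\
  (forall e, q' e -> length e = L -> exists k, q' (e ++ k) /\ full_split H q' (e ++ k) /\ length (e ++ k) < L').

Lemma fusion_limit {T} (H : nat -> T -> Prop) (qs : nat -> list T -> Prop) (Ls : nat -> nat) :
  good_H H -> PT H (qs 0) -> (forall k, fus H (qs k) (Ls k) (qs (S k)) (Ls (S k))) ->
  PT H (fun v => forall k, qs k v) /\ forall k, stronger (fun v => forall k, qs k v) (qs k).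
Proof.
  intros G P0 F.
  assert (PTk : forall k, PT H (qs k)). { intros [|k]; auto. apply (F k). }
  assert (Lmono : forall k d, Ls k + d <= Ls (k + d)).
  { intros k d. induction d. rewrite !Nat.add_0_r. lia. rewrite !Nat.add_succ_r.
    destruct (F (k + d)) as [_ [_ [_ [HL _]]]]. lia. }
  assert (Lge : forall k, k <= Ls k). { intros k. pose proof (Lmono 0 k) as Hm. rewrite Nat.add_0_l in Hm. lia. }
  assert (chain : forall k d, stronger (qs (k + d)) (qs k)).
  { intros k d. induction d. rewrite Nat.add_0_r. intros v; auto.
    rewrite Nat.add_succ_r. intros v Hv. apply IHd. destruct (F (k + d)) as [_ [Hs _]]. apply Hs. auto. }
  assert (agree : forall k d v, length v <= Ls k -> (qs (k + d) v <-> qs k v)).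
  { intros k d v Hv. induction d. rewrite Nat.add_0_r. tauto.
    rewrite Nat.add_succ_r. rewrite <- IHd. destruct (F (k + d)) as [_ [_ [Ha _]]]. apply Ha. pose proof (Lmono k d). lia. }
  assert (lim : forall k v, length v <= Ls k -> ((forall j, qs j v) <-> qs k v)).
  { intros k v Hv. split; auto. intros Hk j. destruct (Nat.le_ge_cases j k) as [Hj|Hj].
    - replace k with (j + (k - j)) in Hk by lia. apply chain in Hk. auto.
    - replace j with (k + (j - k)) by lia. apply agree; auto. }
  assert (fs : forall k v, length v < Ls k -> full_split H (qs k) v -> full_split H (fun v => forall k, qs k v) v).
  { intros k v Hv Hf i. rewrite (lim k). apply Hf. rewrite length_app; simpl; lia. }
  split; [|intros k v Hv; auto].
  split; [|split; [|split; [|split]]].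
  - exists []. intros k. apply PT_nil with H; auto.
  - intros a b Hab k. eapply PT_closed; [apply PTk|apply (Hab k)|apply pre_app].
  - intros v Hv. destruct (PTk 0) as [_ [_ [HB _]]]. apply HB. apply Hv.
  - intros v Hv. set (k := S (length v)).
    assert (Hl : length v < Ls k) by (pose proof (Lge k); unfold k in *; lia).
    destruct (PTk k) as [_ [_ [_ [HC _]]]]. destruct (HC v (Hv k)) as [[i [Hi Hu]]|Hf].
    + left. exists i. split.
      * apply (lim k). rewrite length_app; simpl; lia. auto.
      * intros j Hj. apply Hu. apply Hj.
    + right. eapply fs; eauto.
  - intros v Hv. set (k := length v).
    assert (Hl : length v <= Ls k) by (pose proof (Lge k); unfold k in *; lia).
    destruct (PT_extend H (qs (S k)) v G (PTk (S k)) (Hv (S k)) (Ls k - length v)) as [d [Hd Hdl]].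
    destruct (F k) as [_ [_ [_ [_ Hfr]]]].
    destruct (Hfr (v ++ d) Hd) as [kk [Hk1 [Hk2 Hk3]]]. rewrite length_app; lia.
    exists (d ++ kk). rewrite app_assoc. split.
    + apply (lim (S k)). lia. auto.
    + eapply fs; eauto.
Qed.

Definition Phi {T} (H : nat -> T -> Prop) (U : nset -> Prop) X t (r : list T -> Prop) :=
  exists W, U W /\ forall N, exists r', PT H r' /\ stronger r' r /\
    forall n, n < N -> W n -> forces_t H X t r' n.

Lemma firstn_ext {T} L (v w : list T) : L <= length v -> firstn L (v ++ w) = firstn L v.
Proof.
  intros Hl. rewrite firstn_app. replace (L - length v) with 0 by lia. simpl. apply app_nil_r.
Qed.

Lemma step_ex {T} (H : nat -> T -> Prop) U X t p0 q L : good_H H -> ultrafilter U ->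
  (forall r, PT H r -> stronger r p0 -> Phi H U X t r) -> PT H q -> stronger q p0 ->
  exists W, U W /\ forall N, exists q' L', fus H q L q' L' /\
     forall n, n < N -> W n -> forces_t H X t q' n.
Proof.
  intros G HU HP Pq Sq.
  pose proof Pq as [HAq [HClq [HBq [HCq HDq]]]].
  assert (E1 : forall e, exists W, (q e /\ length e = L) -> U W /\ forall N, exists r',
     PT H r' /\ stronger r' (restr q e) /\ forall n, n < N -> W n -> forces_t H X t r' n).
  { intros e. destruct (classic (q e /\ length e = L)) as [[He HL]|Hn].
    - destruct (HP (restr q e) (restr_PT H q e Pq He)) as [W [UW HW]].
      + intros m Hm. apply Sq. apply restr_stronger in Hm. auto.
      + exists W. intros _. auto.
    - exists (fun _ => True). intros c; contradiction. }
  apply choice in E1. destruct E1 as [Wf HWf].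
  exists (fun n => forall e, q e -> length e = L -> Wf e n). split.
  { destruct (PT_level_list H G L) as [l Hl].
    pose proof (U_fin U (fun e => q e /\ length e = L) Wf HU (fun e c => proj1 (HWf e c)) l) as Ul.
    destruct HU as [Hup _]. eapply Hup; [exact Ul|]. intros n Hn e He HL. apply Hn; auto.
    apply (Hl q e Pq He HL). }
  intros N.
  assert (E2 : forall e, exists r, (q e /\ length e = L) -> PT H r /\ stronger r (restr q e) /\
     forall n, n < N -> Wf e n -> forces_t H X t r n).
  { intros e. destruct (classic (q e /\ length e = L)) as [c|c].
    - destruct (proj2 (HWf e c) N) as [r Hr]. exists r; auto.
    - exists q. intros; contradiction. }
  apply choice in E2. destruct E2 as [R HR].
  set (q' := fun v => q v /\ (length v <= L \/ R (firstn L v) v)).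
  assert (flen : forall v : list T, L <= length v -> length (firstn L v) = L).
  { intros v Hv. apply firstn_length_le. auto. }
  assert (qfirst : forall v : list T, q v -> q (firstn L v)).
  { intros v Hv. eapply PT_closed; eauto. apply firstn_pre. }
  assert (PTR : forall e : list T, q e -> length e = L -> PT H (R e)).
  { intros e He HL. apply (HR e (conj He HL)). }
  assert (K1 : forall e : list T, q e -> length e = L -> R e e).
  { intros e He HL. eapply piece_contains; eauto. apply (HR e (conj He HL)). }
  assert (Rq : forall e v : list T, q e -> length e = L -> R e v -> q v).
  { intros e v He HL Hv. destruct (HR e (conj He HL)) as [_ [S _]]. apply S in Hv.
    apply restr_stronger in Hv; auto. }
  assert (K4 : forall v : list T, L <= length v -> q (firstn L v) -> (q' v <-> R (firstn L v) v)).
  { intros v Hv Hf. split.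
    - intros [Hq [Hl|Hr]]; auto. rewrite firstn_all2 by lia. apply K1; auto. lia.
    - intros Hr. split; [|right; auto]. eapply Rq; eauto. }
  assert (succ_hi : forall (v : list T) i, L <= length v -> q (firstn L v) ->
     (q' (v ++ [i]) <-> R (firstn L v) (v ++ [i]))).
  { intros v i Hv Hf. rewrite <- (firstn_ext L v [i]) by auto. apply K4.
    rewrite length_app; lia. rewrite firstn_ext; auto. }
  assert (succ_lo : forall (v : list T) i, length v < L -> (q' (v ++ [i]) <-> q (v ++ [i]))).
  { intros v i Hv. split. intros [? _]; auto. intros Hq; split; auto. left.
    rewrite length_app; simpl; lia. }
  assert (HCl' : forall a b : list T, q' (a ++ b) -> q' a).
  { intros a b [Hab C]. split. eapply HClq; eauto.
    destruct (le_lt_dec (length a) L) as [l|l]; [left; auto|right].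
    destruct C as [C|C]. rewrite length_app in C; lia.
    rewrite firstn_ext in C by lia. pose proof (qfirst a (HClq _ _ Hab)) as Hfa.
    eapply PT_closed; [apply (PTR _ Hfa (flen a ltac:(lia)))|exact C|apply pre_app]. }
  assert (Dp : forall v : list T, q' v -> L <= length v -> exists k, q' (v ++ k) /\ full_split H q' (v ++ k)).
  { intros v Hv Hl. pose proof (qfirst v (proj1 Hv)) as Hf.
    pose proof (proj1 (K4 v Hl Hf) Hv) as Hr.
    destruct (PTR _ Hf (flen v Hl)) as [_ [_ [_ [_ HDR]]]].
    destruct (HDR v Hr) as [k [Hk Hfk]]. exists k.
    assert (Hl2 : L <= length (v ++ k)) by (rewrite length_app; lia).
    assert (Hf2 : firstn L (v ++ k) = firstn L v) by (apply firstn_ext; auto).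
    split.
    - apply K4; auto. rewrite Hf2; auto. rewrite Hf2; auto.
    - intros i. rewrite succ_hi; auto. rewrite Hf2. apply Hfk. rewrite Hf2; auto. }
  assert (P' : PT H q').
  { split; [|split; [|split; [|split]]].
    - exists []. split. apply PT_nil with H; auto. left; simpl; lia.
    - exact HCl'.
    - intros v [Hv _]. apply HBq; auto.
    - intros v [Hv C]. destruct (lt_dec (length v) L) as [l|l].
      + destruct (HCq v Hv) as [[i [Hi Hu]]|Hfs].
        * left. exists i. split. apply succ_lo; auto. intros j Hj. apply Hu. apply (proj1 (succ_lo v j l)); exact Hj.
        * right. intros i. rewrite succ_lo; auto.
      + assert (Hl : L <= length v) by lia. pose proof (qfirst v Hv) as Hf.
        pose proof (proj1 (K4 v Hl Hf) (conj Hv C)) as Hr.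
        destruct (PTR _ Hf (flen v Hl)) as [_ [_ [_ [HCR _]]]].
        destruct (HCR v Hr) as [[i [Hi Hu]]|Hfs].
        * left. exists i. split. apply succ_hi; auto. intros j Hj. apply Hu. apply (proj1 (succ_hi v j Hl Hf)); exact Hj.
        * right. intros i. rewrite succ_hi; auto.
    - intros v Hv. destruct (le_lt_dec L (length v)) as [l|l].
      + apply Dp; auto.
      + destruct (PT_extend H q v G Pq (proj1 Hv) (L - length v)) as [d [Hd Hdl]].
        destruct (Dp (v ++ d)) as [k [Hk1 Hk2]].
        * split; auto. left. rewrite length_app; lia.
        * rewrite length_app; lia.
        * exists (d ++ k). rewrite app_assoc. auto. }
  destruct (PT_level_list H G L) as [l Hl].
  destruct (max_list (fun e => q' e /\ length e = L)
    (fun e m => exists k, q' (e ++ k) /\ full_split H q' (e ++ k) /\ length (e ++ k) = m)) with (l := l)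
    as [M HM].
  { intros e [He HL]. destruct (Dp e He) as [k [Hk1 Hk2]]. lia. exists (length (e ++ k)), k. auto. }
  exists q', (S (L + M)). split.
  - split; [auto|split; [|split; [|split]]].
    + intros v [Hv _]; auto.
    + intros v Hv. split. intros [? _]; auto. intros Hq; split; auto.
    + lia.
    + intros e He HL. destruct (HM e (Hl q' e P' He HL) (conj He HL)) as [m [Hm [k [Hk1 [Hk2 Hk3]]]]].
      exists k. split; auto. split; auto. lia.
  - intros n Hn Wn. apply (front_forces H X t q' L n G P'). intros e He HL.
    pose proof (proj1 He) as Hqe.
    destruct (HR e (conj Hqe HL)) as [_ [_ HF]].
    apply forces_t_mono with (q2 := R e); [|apply HF; auto].
    intros m [Hm Cm]. destruct Cm as [C|C].
    + eapply PT_closed; [apply (PTR e Hqe HL)|apply (K1 e Hqe HL)|exact C].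
    + assert (Hlm : L <= length m) by (subst L; apply pre_len; auto).
      assert (Fm : firstn L m = e) by (subst L; apply pre_firstn; auto).
      rewrite <- Fm. apply K4; auto. rewrite Fm; auto.
Qed.

Lemma decide_ex {T} (H : nat -> T -> Prop) X c n : PT H c ->
  exists c', PT H c' /\ stronger c' c /\ (forces_in H c' X n \/ forces_notin H c' X n).
Proof.
  intros Pc. destruct (classic (exists r, X n r /\ compatible H c r)) as [[r [Xr [s [Ps [S1 S2]]]]]|No].
  - exists s. split; auto. split; auto. left. intros q' Pq' Sq'. exists r. split; auto.
    exists q'. split; auto. split. intros e He; auto. intros e He; auto.
  - exists c. split; auto. split. intros e He; auto. right. intros r Xr Hc. apply No. eauto.
Qed.

Lemma Phi_mono {T} (H : nat -> T -> Prop) U X t r1 r2 : stronger r1 r2 -> Phi H U X t r1 -> Phi H U X t r2.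
Proof.
  intros S [W [UW HW]]. exists W. split; auto. intros N. destruct (HW N) as [r' [P' [S' F']]].
  exists r'. split; auto. split; auto. intros e He; auto.
Qed.

Lemma phi_dich {T} (H : nat -> T -> Prop) U X r : ultrafilter U -> PT H r ->
  Phi H U X true r \/ Phi H U X false r.
Proof.
  intros HU Pr.
  assert (E : forall pc : (list T -> Prop) * nat, exists c', PT H (fst pc) ->
     PT H c' /\ stronger c' (fst pc) /\ (forces_in H c' X (snd pc) \/ forces_notin H c' X (snd pc))).
  { intros [c n]. destruct (classic (PT H c)) as [Pc|Pc].
    - destruct (decide_ex H X c n Pc) as [c' Hc']. exists c'. auto.
    - exists c. simpl; intros; contradiction. }
  apply choice in E. destruct E as [f Hf].
  pose (ch := fix ch (n : nat) : list T -> Prop := match n with 0 => r | S m => f (ch m, m) end).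
  assert (PTch : forall n, PT H (ch n)).
  { induction n. exact Pr. apply (Hf (ch n, n)). exact IHn. }
  assert (mono : forall n d, stronger (ch (n + d)) (ch n)).
  { intros n d. induction d. rewrite Nat.add_0_r. intros e He; auto.
    rewrite Nat.add_succ_r. intros e He. apply IHd.
    destruct (Hf (ch (n + d), n + d) (PTch _)) as [_ [S _]]. apply S. exact He. }
  assert (dec : forall n, forces_in H (ch (S n)) X n \/ forces_notin H (ch (S n)) X n).
  { intros n. apply (Hf (ch n, n) (PTch n)). }
  assert (getr : forall N, PT H (ch N) /\ stronger (ch N) r /\
      forall n, n < N -> stronger (ch N) (ch (S n))).
  { intros N. split; auto. split. apply (mono 0 N). intros n Hn.
    replace N with (S n + (N - S n)) by lia. apply mono. }
  destruct HU as [Hup [Hint [H0 Hu]]].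
  destruct (Hu (fun n => forces_in H (ch (S n)) X n)) as [UD|UD].
  - left. eexists. split; [exact UD|]. intros N. exists (ch N). destruct (getr N) as [A [B C]].
    split; auto. split; auto. intros n Hn Dn. simpl. apply forces_t_mono with (t := true) (q2 := ch (S n)); auto.
  - right. eexists. split; [exact UD|]. intros N. exists (ch N). destruct (getr N) as [A [B C]].
    split; auto. split; auto. intros n Hn Dn. apply forces_t_mono with (t := false) (q2 := ch (S n)); auto.
    simpl. destruct (dec n); [contradiction|auto].
Qed.

Lemma dichotomy {T} (H : nat -> T -> Prop) U X p : ultrafilter U -> PT H p ->
  exists t p0, PT H p0 /\ stronger p0 p /\ forall r, PT H r -> stronger r p0 -> Phi H U X t r.
Proof.
  intros HU Pp. destruct (classic (forall r, PT H r -> stronger r p -> Phi H U X true r)) as [A|A].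
  - exists true, p. split; auto. split; auto. intros e He; auto.
  - apply not_all_ex_not in A. destruct A as [r A].
    apply imply_to_and in A. destruct A as [Pr A]. apply imply_to_and in A. destruct A as [Sr A].
    exists false, r. split; auto. split; auto. intros r' Pr' Sr'.
    destruct (phi_dich H U X r' HU Pr') as [B|B]; auto.
    exfalso. apply A. eapply Phi_mono; eauto.
Qed.

Fixpoint enc (h : list nat) : nat :=
  match h with [] => 0 | a :: h' => S (Cantor.to_nat (a, enc h')) end.
Fixpoint decf (f : nat) (n : nat) : list nat :=
  match f with 0 => [] | S f' =>
    match n with 0 => [] | S m => let (a, b) := Cantor.of_nat m in a :: decf f' b end end.

Lemma dec_enc : forall h f, enc h <= f -> decf f (enc h) = h.
Proof.
  induction h as [|a h IH]; intros f Hf.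
  - destruct f; reflexivity.
  - destruct f as [|f]; simpl in Hf; [lia|]. cbn -[Cantor.of_nat Cantor.to_nat]. rewrite Cantor.cancel_of_to.
    rewrite IH; auto. pose proof (Cantor.to_nat_non_decreasing a (enc h)). lia.
Qed.

Fixpoint Gs (m : list nat -> nat) (k : nat) : list nat * list nat * nat :=
  match k with
  | 0 => ([], [], 0)
  | S k => let '(h0, h1, lb) := Gs m k in
           let xa := Nat.max lb (m h0) in
           let xb := Nat.max (S xa) (m h1) in
           let h0' := h0 ++ [xb] in
           (h0', h1 ++ [Nat.max (S xb) (m h0')], S xb)
  end.

Definition gh0 m k := fst (fst (Gs m k)).
Definition gh1 m k := snd (fst (Gs m k)).
Definition glb m k := snd (Gs m k).
Definition gxa m k := Nat.max (glb m k) (m (gh0 m k)).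
Definition gxb m k := Nat.max (S (gxa m k)) (m (gh1 m k)).

Lemma Gs_S m k : gh0 m (S k) = gh0 m k ++ [gxb m k] /\ gh1 m (S k) = gh1 m k ++ [gxa m (S k)]
  /\ glb m (S k) = S (gxb m k).
Proof.
  unfold gxb, gxa, gh0, gh1, glb. cbn [Gs]. destruct (Gs m k) as [[a b] c]. cbn -[Nat.max]. auto.
Qed.

Lemma construct {T} (H : nat -> T -> Prop) X t (p0 : list T -> Prop)
  (Wfun : (list T -> Prop) * nat -> nset)
  (stepf : (list T -> Prop) * nat -> nat -> (list T -> Prop) * nat) :
  good_H H ->
  (forall s, PT H (fst s) -> stronger (fst s) p0 -> forall N,
     fus H (fst s) (snd s) (fst (stepf s N)) (snd (stepf s N)) /\
     forall n, n < N -> Wfun s n -> forces_t H X t (fst (stepf s N)) n) ->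
  forall (ss : nat -> (list T -> Prop) * nat) (Ns : nat -> nat),
  PT H (fst (ss 0)) -> stronger (fst (ss 0)) p0 ->
  (forall k, ss (S k) = stepf (ss k) (Ns k)) ->
  exists q, PT H q /\ stronger q p0 /\
    forall n k, n < Ns k -> Wfun (ss k) n -> forces_t H X t q n.
Proof.
  intros G Hs ss Ns P0 S0 Hss.
  assert (V : forall k, PT H (fst (ss k)) /\ stronger (fst (ss k)) p0).
  { induction k; auto. destruct IHk as [A B]. rewrite Hss.
    destruct (Hs (ss k) A B (Ns k)) as [[F1 [F2 _]] _]. split; auto.
    intros e He; auto. }
  destruct (fusion_limit H (fun k => fst (ss k)) (fun k => snd (ss k)) G P0) as [PL SL].
  { intros k. rewrite Hss. apply Hs; apply V. }
  exists (fun v => forall k, fst (ss k) v). split; auto. split.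
  - intros e He. apply S0. apply (SL 0). auto.
  - intros n k Hn Hw. apply forces_t_mono with (q2 := fst (ss (S k))). apply SL.
    rewrite Hss. apply Hs; auto; apply V.
Qed.

Theorem lemma2p22 :
  forall (T : Type) (H : nat -> T -> Prop),
    good_H H ->
    forall U : nset -> Prop, P_point U ->
    forall (p : list T -> Prop), PT H p ->
    forall X : nat -> (list T -> Prop) -> Prop, nice_name H X ->
      exists q, PT H q /\ stronger q p /\
        exists u, U u /\
          ((forall n, u n -> forces_in H q X n) \/
           (forall n, u n -> forces_notin H q X n)).
Proof.
  intros T H G U [HU HPP] p Pp X _.
  destruct (dichotomy H U X p HU Pp) as [t [p0 [P0 [S0 HPhi]]]].
  assert (E1 : forall s : (list T -> Prop) * nat, exists W, (PT H (fst s) /\ stronger (fst s) p0) ->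
     U W /\ forall N, exists s', fus H (fst s) (snd s) (fst s') (snd s') /\
       forall n, n < N -> W n -> forces_t H X t (fst s') n).
  { intros [q L]. destruct (classic (PT H q /\ stronger q p0)) as [[Pq Sq]|No].
    - destruct (step_ex H U X t p0 q L G HU HPhi Pq Sq) as [W [UW HW]]. exists W. intros _.
      split; auto. intros N. destruct (HW N) as [q' [L' HH]]. exists (q', L'). auto.
    - exists (fun _ => True). intros c; contradiction. }
  apply choice in E1. destruct E1 as [Wfun HWfun].
  assert (E2 : forall sN : ((list T -> Prop) * nat) * nat, exists s',
     (PT H (fst (fst sN)) /\ stronger (fst (fst sN)) p0) ->
     fus H (fst (fst sN)) (snd (fst sN)) (fst s') (snd s') /\
       forall n, n < snd sN -> Wfun (fst sN) n -> forces_t H X t (fst s') n).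
  { intros [s N]. destruct (classic (PT H (fst s) /\ stronger (fst s) p0)) as [c|c].
    - destruct (proj2 (HWfun s c) N) as [s' Hs']. exists s'. auto.
    - exists s. intros; contradiction. }
  apply choice in E2. destruct E2 as [g Hg].
  set (stepf := fun s N => g (s, N)).
  assert (Hstep : forall s, PT H (fst s) -> stronger (fst s) p0 -> forall N,
     fus H (fst s) (snd s) (fst (stepf s N)) (snd (stepf s N)) /\
     forall n, n < N -> Wfun s n -> forces_t H X t (fst (stepf s N)) n).
  { intros s A B N. apply (Hg (s, N)). auto. }
  set (state := fun h => fold_left stepf h (p0, 0)).
  assert (Vst : forall h, PT H (fst (state h)) /\ stronger (fst (state h)) p0).
  { intros h. unfold state.
    assert (forall s, PT H (fst s) /\ stronger (fst s) p0 -> PT H (fst (fold_left stepf h s)) /\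
       stronger (fst (fold_left stepf h s)) p0).
    { induction h as [|a h IH]; intros s [A B]; simpl; auto. apply IH.
      destruct (Hstep s A B a) as [[F1 [F2 _]] _]. split; auto. intros e He; auto. }
    apply H0. simpl. split; auto. intros e He; auto. }
  set (As := fun n => Wfun (state (decf n n))).
  assert (UAs : forall n, U (As n)) by (intros n; apply (HWfun _ (Vst _))).
  destruct (HPP As UAs) as [A [UA HA]].
  assert (Alm : forall h, exists m, forall k, m <= k -> A k -> Wfun (state h) k).
  { intros h. destruct (HA (enc h)) as [m Hm]. exists m. intros k Hk Ak.
    specialize (Hm k Hk Ak). unfold As in Hm. rewrite dec_enc in Hm; auto. }
  apply choice in Alm. destruct Alm as [mf Hmf].
  pose proof (Gs_S mf) as GS.
  assert (ineq : forall k, gxa mf k < gxb mf k /\ gxb mf k < gxa mf (S k) /\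
     mf (gh0 mf k) <= gxa mf k /\ mf (gh1 mf k) <= gxb mf k).
  { intros k. destruct (GS k) as [_ [_ E]].
    assert (gxa mf (S k) >= glb mf (S k)) by (unfold gxa; lia).
    unfold gxb in *. unfold gxa in *. lia. }
  assert (xage : forall k, k <= gxa mf k).
  { induction k. lia. pose proof (ineq k). lia. }
  set (u0 := fun n => exists k, n < gxb mf k /\ Wfun (state (gh0 mf k)) n).
  set (u1 := fun n => exists k, n < gxa mf (S k) /\ Wfun (state (gh1 mf k)) n).
  assert (cover : forall n, A n -> Wfun (state []) n -> u0 n \/ u1 n).
  { intros n An Wn. assert (forall K, n < gxa mf K -> u0 n \/ u1 n) as HK.
    { induction K; intros Hn.
      - left. exists 0. split. pose proof (ineq 0). lia. exact Wn.
      - destruct (lt_dec n (gxa mf K)) as [l|l]; auto.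
        pose proof (ineq K) as [I1 [I2 [I3 I4]]].
        destruct (lt_dec n (gxb mf K)) as [l2|l2].
        + left. exists K. split; auto. apply Hmf; auto. lia.
        + right. exists K. split; auto. apply Hmf; auto. lia. }
    apply (HK (S n)). pose proof (xage (S n)). lia. }
  assert (Uu : U u0 \/ U u1).
  { destruct HU as [Hup [Hint [H0 Hu]]]. destruct (Hu u0) as [Y|Y]; auto. right.
    assert (UW : U (Wfun (state []))) by apply (HWfun _ (Vst [])).
    eapply Hup; [apply (Hint _ _ Y (Hint _ _ UA UW))|].
    intros n [N0 [An Wn]]. destruct (cover n An Wn); [contradiction|auto]. }
  assert (fin : forall u q, U u -> PT H q -> stronger q p0 -> (forall n, u n -> forces_t H X t q n) ->
     exists q, PT H q /\ stronger q p /\ exists u, U u /\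
          ((forall n, u n -> forces_in H q X n) \/ (forall n, u n -> forces_notin H q X n))).
  { intros u q Uu' Pq Sq F. exists q. split; auto. split. intros e He; auto.
    exists u. split; auto. destruct t; [left|right]; exact F. }
  destruct Uu as [Uu|Uu].
  - destruct (construct H X t p0 Wfun stepf G Hstep (fun k => state (gh0 mf k)) (gxb mf))
      as [q [Pq [Sq F]]].
    + apply Vst.
    + apply Vst.
    + intros k. unfold state. rewrite (proj1 (GS k)), fold_left_app. reflexivity.
    + apply (fin u0 q Uu Pq Sq). intros n [k [Hk Wk]]. eapply F; eauto.
  - destruct (construct H X t p0 Wfun stepf G Hstep (fun k => state (gh1 mf k)) (fun k => gxa mf (S k)))
      as [q [Pq [Sq F]]].
    + apply Vst.
    + apply Vst.
    + intros k. unfold state. rewrite (proj1 (proj2 (GS k))), fold_left_app. reflexivity.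
    + apply (fin u1 q Uu Pq Sq). intros n [k [Hk Wk]]. eapply F; eauto.
Qed.
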